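(* Let $A(z)=|z|^2I_d-z\otimes z$ on $\mathbb{R}^d$ and let $u$ be a probability distribution on $\mathbb{R}^d$ with finite second moment which is not concentrated on a line. Set $2E=\int|x|^2\,\mathrm{d}u(x)$ and $V=\int x\,\mathrm{d}u(x)$. Then there exists $\varepsilon>0$ such that for all $x\in\mathbb{R}^d$, $$\varepsilon\le \|A*u(x)\|_2\le 2E+|x-V|^2,$$ and $\varepsilon$ can be taken to be $\varepsilon=\operatorname{tr}(\mathrm{cov}(u))-\|\mathrm{cov}(u)\|_2$. In particular these bounds hold for any continuous probability density $u$ with finite second moment.
   Context: $\|\cdot\|_2$ denotes the matrix 2-norm (spectral norm); $(A*u)(x)=\int A(x-y)\,\mathrm{d}u(y)$ entrywise; $\mathrm{cov}(u)$ is the covariance matrix of $u$. *)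

(* Defs.v *)
From HB Require Import structures.
From mathcomp Require Import all_boot all_order all_algebra.
From mathcomp Require Import all_classical all_reals all_analysis.
Set Implicit Arguments. Unset Strict Implicit. Unset Printing Implicit Defensive.
Import Order.TTheory GRing.Theory Num.Theory.
Import numFieldNormedType.Exports.
Local Open Scope classical_set_scope.
Local Open Scope ring_scope.

(* R^d as row vectors 'rV[R]_d, equipped with its Borel sigma-algebra
   (the sigma-algebra generated by the open sets of the product topology). *)
Definition Rd (R : realType) (d : nat) := g_sigma_algebraType (@open 'rV[R]_d).

Definition enorm (R : realType) (d : nat) (v : 'rV[R]_d) : R :=
  Num.sqrt (\sum_(i < d) v 0 i ^+ 2).

Definition spec_norm (R : realType) (d : nat) (M : 'M[R]_d) : R :=
  sup [set enorm (M *m v^T)^T | v in [set v : 'rV[R]_d | enorm v = 1]].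

Definition Amat (R : realType) (d : nat) (z : 'rV[R]_d) : 'M[R]_d :=
  (enorm z ^+ 2) *: 1%:M - z^T *m z.

Definition mconv (R : realType) (d : nat) (A : 'rV[R]_d -> 'M[R]_d)
  (u : probability (Rd R d) R) (x : 'rV[R]_d) : 'M[R]_d :=
  \matrix_(i, j) (\int[u]_y (A (x - (y : 'rV[R]_d)) i j)).

Definition mean (R : realType) (d : nat) (u : probability (Rd R d) R) : 'rV[R]_d :=
  \row_i (\int[u]_x ((x : 'rV[R]_d) 0 i)).

Definition cov (R : realType) (d : nat) (u : probability (Rd R d) R) : 'M[R]_d :=
  \matrix_(i, j) (\int[u]_x (((x : 'rV[R]_d) 0 i - mean u 0 i) * (x 0 j - mean u 0 j))).

Definition finite_second_moment (R : realType) (d : nat) (u : probability (Rd R d) R) :=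
  u.-integrable [set: Rd R d] (fun x => (enorm (x : 'rV[R]_d) ^+ 2)%:E).

Definition concentrated_on_line (R : realType) (d : nat) (u : probability (Rd R d) R) :=
  exists (a b : 'rV[R]_d), b != 0 /\
    u [set (a + t *: b : Rd R d) | t in [set: R]] = 1%E.

(* Main.v *)
Require Import Defs.
From HB Require Import structures.
From mathcomp Require Import all_boot all_order all_algebra.
From mathcomp Require Import all_classical all_reals all_analysis.
From mathcomp Require Import ring lra.
Import Order.TTheory GRing.Theory Num.Theory.
Import numFieldNormedType.Exports.
Local Open Scope classical_set_scope.
Local Open Scope ring_scope.

Lemma amgm (R : realDomainType) (a b : R) : `|a| * `|b| <= a ^+ 2 + b ^+ 2.
Proof.
rewrite -(real_normK (num_real a)) -(real_normK (num_real b)).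
have := sqr_ge0 (`|a| - `|b|); have := normr_ge0 a; have := normr_ge0 b.
move: `|a| `|b| => x y; nra.
Qed.
Lemma le1sq (R : realDomainType) (a : R) : `|a| <= 1 + a ^+ 2.
Proof.
rewrite -(real_normK (num_real a)).
have := sqr_ge0 (`|a| - 1); have := normr_ge0 a.
move: `|a| => x; nra.
Qed.

Lemma quadCS (R : realFieldType) (a b c : R) :
  (forall s t, 0 <= s ^+ 2 * a + 2 * s * t * b + t ^+ 2 * c) -> b ^+ 2 <= a * c.
Proof.
move=> H.
have c0 : 0 <= c.
  have := H 0 1; have -> : 0 ^+ 2 * a + 2 * 0 * 1 * b + 1 ^+ 2 * c = c by ring. done.
have a0 : 0 <= a.
  have := H 1 0; have -> : 1 ^+ 2 * a + 2 * 1 * 0 * b + 0 ^+ 2 * c = a by ring. done.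
have [cp|] := ltP 0 c.
  have h := H c (- b).
  have e : c ^+ 2 * a + 2 * c * - b * b + (- b) ^+ 2 * c = c * (a * c - b ^+ 2) by ring.
  rewrite e in h. rewrite pmulr_rge0 // in h; lra.
move=> cle; have c00 : c = 0 by apply/eqP; rewrite eq_le cle c0.
have h := H (2 * b) (- (a + 1)).
have e : (2 * b) ^+ 2 * a + 2 * (2 * b) * (- (a + 1)) * b + (- (a + 1)) ^+ 2 * c = - (4 * b ^+ 2).
  rewrite c00; ring.
rewrite e in h; rewrite c00 mulr0; lra.
Qed.

Lemma finCS (R : realFieldType) (n : nat) (a b : 'I_n -> R) :
  (\sum_k a k * b k) ^+ 2 <= (\sum_k a k ^+ 2) * (\sum_k b k ^+ 2).
Proof.
apply: quadCS => s t.
have -> : s ^+ 2 * (\sum_k a k ^+ 2) + 2 * s * t * (\sum_k a k * b k) + t ^+ 2 * (\sum_k b k ^+ 2)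
   = \sum_k (s * a k + t * b k) ^+ 2.
  rewrite !mulr_sumr -!big_split /=; apply: eq_bigr => k _; ring.
by apply: sumr_ge0 => k _; exact: sqr_ge0.
Qed.

Lemma sqrt_le (R : realType) (a B : R) : 0 <= B -> a <= B ^+ 2 -> Num.sqrt a <= B.
Proof. by move=> B0 h; have := ler_wsqrtr h; rewrite sqrtr_sqr ger0_norm. Qed.

Lemma dot_le (R : realType) n (a b : 'I_n -> R) :
  \sum_k a k ^+ 2 = 1 -> \sum_k a k * b k <= Num.sqrt (\sum_k b k ^+ 2).
Proof.
move=> H; have h := finCS _ _ a b; rewrite H mul1r in h.
have := ler_wsqrtr h; rewrite sqrtr_sqr; apply: le_trans; exact: ler_norm.
Qed.

Definition mvv {R : realType} {d} (M : 'M[R]_d) (v : 'rV[R]_d) (k : 'I_d) := \sum_l M k l * v 0 l.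

Lemma enorm2 (R : realType) d (v : 'rV[R]_d) : enorm v ^+ 2 = \sum_k v 0 k ^+ 2.
Proof. by rewrite /enorm sqr_sqrtr //; apply: sumr_ge0 => k _; exact: sqr_ge0. Qed.

Lemma enorm_mv (R : realType) d (M : 'M[R]_d) v :
  enorm ((M *m v^T)^T) = Num.sqrt (\sum_k mvv M v k ^+ 2).
Proof.
rewrite /enorm; congr Num.sqrt; apply: eq_bigr => k _; rewrite !mxE; congr (_ ^+ 2).
by apply: eq_bigr => l _; rewrite !mxE.
Qed.

Lemma unitE (R : realType) d (v : 'rV[R]_d) : (enorm v = 1) <-> (\sum_k v 0 k ^+ 2 = 1).
Proof.
split => h; first by rewrite -enorm2 h expr1n.
by rewrite /enorm h sqrtr1.
Qed.

Lemma specP (R : realType) d (M : 'M[R]_d) (B : R) : (0 < d)%N -> 0 <= B ->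
  (forall v : 'rV[R]_d, \sum_k v 0 k ^+ 2 = 1 -> \sum_k mvv M v k ^+ 2 <= B ^+ 2) ->
  (spec_norm M <= B) /\ (forall v : 'rV[R]_d, \sum_k v 0 k ^+ 2 = 1 -> Num.sqrt (\sum_k mvv M v k ^+ 2) <= spec_norm M).
Proof.
move=> d0 B0 H.
have ub : ubound [set enorm (M *m v^T)^T | v in [set v : 'rV[R]_d | enorm v = 1]] B.
  by move=> _ [v /unitE v1 <-]; rewrite enorm_mv; apply: sqrt_le => //; exact: H.
split.
  apply: ge_sup => //.
  pose i0 := Ordinal d0.
  exists (enorm ((M *m (\row_k (k == i0)%:R)^T)^T)); exists (\row_k (k == i0)%:R) => //.
  apply/unitE; rewrite (bigD1 i0) //= big1 ?addr0; first by rewrite mxE eqxx expr1n.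
  by move=> k /negbTE; rewrite mxE => ->; rewrite expr0n.
move=> v v1; rewrite -enorm_mv.
apply: (ub_le_sup (ex_intro _ B ub)); exists v => //; exact/unitE.
Qed.

Lemma sum_pos {R : realType} {n} (G : 'I_n -> R) i : (forall k, 0 <= G k) -> 0 < G i -> 0 < \sum_k G k.
Proof.
move=> G0 Gi; rewrite (bigD1 i) //=.
have : 0 <= \sum_(k < n | k != i) G k by apply: sumr_ge0 => k _.
lra.
Qed.

Lemma sum2_lt (R : realType) n (a b : 'I_n -> 'I_n -> R) i j :
  (forall k l, a k l <= b k l) -> a i j < b i j ->
  \sum_k \sum_l a k l < \sum_k \sum_l b k l.
Proof.
move=> ab aij; rewrite -subr_gt0 -sumrB.
apply: (sum_pos _ i).
  by move=> k; rewrite -sumrB; apply: sumr_ge0 => l _; rewrite subr_ge0.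
rewrite -sumrB; apply: (sum_pos _ j); first by move=> l; rewrite subr_ge0.
by rewrite subr_gt0.
Qed.

Lemma sum_delta' {R : realType} {n} (k : 'I_n) (c : 'I_n -> R) : \sum_l (k == l)%:R * c l = c k.
Proof.
rewrite (bigD1 k) //= eqxx mul1r big1 ?addr0 // => l lk.
by rewrite eq_sym (negbTE lk) mul0r.
Qed.

Lemma sum_lin2 {R : realType} {n} (i0 i1 : 'I_n) (a b : R) (c : 'I_n -> R) :
  \sum_k ((i0 == k)%:R * a + (i1 == k)%:R * b) * c k = a * c i0 + b * c i1.
Proof.
rewrite (eq_bigr (fun k => (i0 == k)%:R * (a * c k) + (i1 == k)%:R * (b * c k))); last by move=> k _; ring.
by rewrite big_split /= !sum_delta'.
Qed.

Lemma perp_unit {R : realType} {n} (w : 'rV[R]_n) : (1 < n)%N ->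
  exists v : 'rV[R]_n, \sum_k v 0 k ^+ 2 = 1 /\ \sum_l v 0 l * w 0 l = 0.
Proof.
move=> n1; have n0 : (0 < n)%N by apply: ltn_trans n1.
pose i0 := Ordinal n0; pose i1 := Ordinal n1.
have i01 : (i0 == i1) = false by [].
have i10 : (i1 == i0) = false by [].
pose a := w 0 i1; pose b := - w 0 i0; pose r := a ^+ 2 + b ^+ 2.
have [r0|rpos] := eqVneq r 0.
  have a0 : a = 0.
    apply/eqP; rewrite -sqrf_eq0; apply/eqP; apply: le_anti; rewrite sqr_ge0 andbT.
    by rewrite -r0 lerDl sqr_ge0.
  have b0 : b = 0.
    apply/eqP; rewrite -sqrf_eq0; apply/eqP; apply: le_anti; rewrite sqr_ge0 andbT.
    by rewrite -r0 lerDr sqr_ge0.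
  exists (\row_k (i0 == k)%:R); split.
    rewrite (eq_bigr (fun k => (i0 == k)%:R * (\row_k (i0 == k)%:R : 'rV[R]_n) 0 k)); last first.
      by move=> k _; rewrite expr2 mxE.
    by rewrite sum_delta' mxE eqxx.
  rewrite (eq_bigr (fun k => (i0 == k)%:R * w 0 k)); last by move=> k _; rewrite mxE.
  by rewrite sum_delta'; move: b0; rewrite /b => /eqP; rewrite oppr_eq0 => /eqP.
have rp : 0 < r by rewrite lt_neqAle eq_sym rpos addr_ge0 // sqr_ge0.
pose s := (Num.sqrt r)^-1.
exists (\row_k (s * ((i0 == k)%:R * a + (i1 == k)%:R * b))); split.
  rewrite (eq_bigr (fun k => ((i0 == k)%:R * (s ^+ 2 * a) + (i1 == k)%:R * (s ^+ 2 * b)) *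
      ((i0 == k)%:R * a + (i1 == k)%:R * b))); last by move=> k _; rewrite mxE; ring.
  rewrite sum_lin2 eqxx i01 i10 /=.
  rewrite /s exprVn sqr_sqrtr ?ltW //.
  by rewrite /r; field; rewrite -/r; rewrite gt_eqF.
rewrite (eq_bigr (fun k => ((i0 == k)%:R * (s * a) + (i1 == k)%:R * (s * b)) * w 0 k)); last first.
  by move=> k _; rewrite mxE; ring.
by rewrite sum_lin2 /a /b; ring.
Qed.

Section S.
Variables (R : realType) (d : nat) (u : probability (Rd R d) R).

Definition crd (i : 'I_d) (y : Rd R d) : R := (y : 'rV[R]_d) 0 i.

Lemma open_meas (A : set (Rd R d)) : @open 'rV[R]_d A -> measurable A.
Proof. by move=> oA; apply: sub_gen_smallest. Qed.

Lemma crd_meas i : measurable_fun setT (crd i).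
Proof.
apply: (measurability (ocitv (R:=R))) => //.
move=> _ [A A0 <-] /=.
rewrite setTI.
have cc : continuous (fun M : 'M[R]_(1, d) => M 0 i) := @coord_continuous R 1 d 0 i.
case/ocitvP: A0 => [->|[[a b] /= ab ->]].
  by rewrite preimage_set0; exact: measurable0.
have -> : crd i @^-1` `]a, b]%classic =
   [set y : Rd R d | a < (y : 'rV[R]_d) 0 i] `&` ~` [set y : Rd R d | b < (y : 'rV[R]_d) 0 i].
  apply/seteqP; split => y /=; rewrite /crd in_itv /=.
    by move=> /andP[-> ]; rewrite leNgt => /negbTE ->.
  by move=> [-> /negP]; rewrite -leNgt.
apply: measurableI; last apply: measurableC; apply: open_meas.
  exact: (open_comp (f := fun M : 'M[R]_(1, d) => M 0 i)) (fun x _ => cc x) (@open_gt _ a).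
exact: (open_comp (f := fun M : 'M[R]_(1, d) => M 0 i)) (fun x _ => cc x) (@open_gt _ b).
Qed.

Definition Int (f : Rd R d -> R) := u.-integrable setT (EFin \o f).
Definition L2 (f : Rd R d -> R) := measurable_fun setT f /\ Int (fun y => f y ^+ 2).

Lemma IntD {f g : Rd R d -> R} : Int f -> Int g -> Int (f \+ g).
Proof.
move=> If Ig; rewrite /Int.
have -> : EFin \o (f \+ g) = ((EFin \o f) \+ (EFin \o g))%E by apply/funext => y.
exact: integrableD.
Qed.

Lemma IntZ (k : R) (f : Rd R d -> R) : Int f -> Int (fun y => k * f y).
Proof.
move=> If; rewrite /Int.
have -> : EFin \o (fun y => k * f y) = (fun y => k%:E * (EFin \o f) y)%E by apply/funext => y.
exact: integrableZl.
Qed.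

Lemma Int_cst (k : R) : Int (fun _ => k).
Proof. exact: (finite_measure_integrable_cst u k measurableT). Qed.

Lemma Int_dom (f g : Rd R d -> R) : measurable_fun setT f -> Int g -> (forall y, `|f y| <= g y) -> Int f.
Proof.
move=> mf Ig fg; apply: (le_integrable measurableT _ _ Ig).
  exact/measurable_realfun.measurable_EFinP.
move=> y _ /=; rewrite !lee_fin.
by apply: (le_trans (fg y)); rewrite ler_norm.
Qed.

Lemma Int_meas {f : Rd R d -> R} : Int f -> measurable_fun setT f.
Proof. by move=> /integrableP[/measurable_realfun.measurable_EFinP]. Qed.

Lemma L2_mul {f g : Rd R d -> R} : L2 f -> L2 g -> Int (f \* g).
Proof.
move=> [mf If] [mg Ig]; apply: (Int_dom _ ((fun y => f y ^+ 2) \+ (fun y => g y ^+ 2))).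
- exact: measurable_realfun.measurable_funM.
- exact: IntD.
move=> y /=; rewrite normrM; exact: amgm.
Qed.

Lemma L2_Int (f : Rd R d -> R) : L2 f -> Int f.
Proof.
move=> [mf If]; apply: (Int_dom _ ((fun _ => 1) \+ (fun y => f y ^+ 2))) => //.
- exact: IntD (Int_cst _) If.
move=> y /=; exact: le1sq.
Qed.

Lemma L2D {f g : Rd R d -> R} : L2 f -> L2 g -> L2 (f \+ g).
Proof.
move=> Lf Lg; have [mf If] := Lf; have [mg Ig] := Lg; split; first exact: measurable_realfun.measurable_funD.
have -> : (fun y => (f \+ g) y ^+ 2) = (fun y => f y ^+ 2) \+ (fun y => 2 * (f y * g y)) \+ (fun y => g y ^+ 2).
  by apply/funext => y /=; ring.
by apply: IntD => //; apply: IntD => //; apply: IntZ; exact: L2_mul.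
Qed.

Lemma L2Z (k : R) (f : Rd R d -> R) : L2 f -> L2 (fun y => k * f y).
Proof.
move=> [mf If]; split; first exact: measurable_realfun.measurable_funM.
have -> : (fun y => (k * f y) ^+ 2) = (fun y => k ^+ 2 * f y ^+ 2) by apply/funext => y; ring.
exact: IntZ.
Qed.

Lemma L2_cst (k : R) : L2 (fun _ => k).
Proof. by split; [exact: measurable_cst | exact: Int_cst]. Qed.

Lemma L2_sum (I : Type) (s : seq I) (F : I -> Rd R d -> R) :
  (forall i, L2 (F i)) -> L2 (fun y => \sum_(i <- s) F i y).
Proof.
move=> LF; elim: s => [|a s IH].
  have -> : (fun y => \sum_(i <- [::]) F i y) = (fun _ => 0) by apply/funext => y; rewrite big_nil.
  exact: L2_cst.
have -> : (fun y => \sum_(i <- a :: s) F i y) = F a \+ (fun y => \sum_(i <- s) F i y).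
  by apply/funext => y; rewrite big_cons.
exact: L2D.
Qed.

Lemma Int_sum (I : Type) (s : seq I) (F : I -> Rd R d -> R) :
  (forall i, Int (F i)) -> Int (fun y => \sum_(i <- s) F i y) /\
   \int[u]_y (\sum_(i <- s) F i y) = \sum_(i <- s) \int[u]_y F i y.
Proof.
move=> IF; elim: s => [|a s [IH1 IH2]].
  have -> : (fun y => \sum_(i <- [::]) F i y) = (fun _ => 0) by apply/funext => y; rewrite big_nil.
  split; first exact: Int_cst.
  by rewrite big_nil Rintegral_cst // mul0r.
have -> : (fun y => \sum_(i <- a :: s) F i y) = F a \+ (fun y => \sum_(i <- s) F i y).
  by apply/funext => y; rewrite big_cons.
split; first exact: IntD.
rewrite big_cons RintegralD //; [by congr (_ + _); exact: IH2 | exact: IF].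
Qed.


Lemma RintE (f g : Rd R d -> R) : (forall y, f y = g y) -> \int[u]_y f y = \int[u]_y g y.
Proof. by move=> e; apply: eq_Rintegral => y _; exact: e. Qed.

Definition ip (f g : Rd R d -> R) := \int[u]_y (f y * g y).

Lemma ipC f g : ip f g = ip g f.
Proof. by apply: eq_Rintegral => y _; rewrite mulrC. Qed.

Lemma ip_ge0 f : 0 <= ip f f.
Proof. by apply: Rintegral_ge0 => y _; rewrite -expr2; exact: sqr_ge0. Qed.

Lemma ipDr f g h : L2 f -> L2 g -> L2 h -> ip f (g \+ h) = ip f g + ip f h.
Proof.
move=> Lf Lg Lh; rewrite /ip.
rewrite (RintE _ (fun y => f y * g y + f y * h y)); last by move=> y; rewrite /= mulrDr.
by rewrite RintegralD //; [exact: L2_mul | exact: L2_mul].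
Qed.

Lemma ipZr k f g : L2 f -> L2 g -> ip f (fun y => k * g y) = k * ip f g.
Proof.
move=> Lf Lg; rewrite /ip.
rewrite (RintE _ (fun y => k * (f y * g y))); last by move=> y; rewrite mulrCA.
by rewrite RintegralZl //; exact: L2_mul.
Qed.

Lemma ip_sumr (I : Type) (s : seq I) (F : I -> Rd R d -> R) f :
  L2 f -> (forall i, L2 (F i)) ->
  ip f (fun y => \sum_(i <- s) F i y) = \sum_(i <- s) ip f (F i).
Proof.
move=> Lf LF; rewrite /ip.
rewrite (RintE _ (fun y => \sum_(i <- s) f y * F i y)); last by move=> y; rewrite mulr_sumr.
by have [_ ->] := Int_sum _ s (fun i y => f y * F i y) (fun i => L2_mul Lf (LF i)).
Qed.

Lemma ip_expand s t f g : L2 f -> L2 g ->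
  ip (fun y => s * f y + t * g y) (fun y => s * f y + t * g y) =
  s ^+ 2 * ip f f + 2 * s * t * ip f g + t ^+ 2 * ip g g.
Proof.
move=> Lf Lg; rewrite /ip.
rewrite (RintE _ (fun y => (s ^+ 2 * (f y * f y) + 2 * s * t * (f y * g y)) + t ^+ 2 * (g y * g y)));
  last by move=> y; ring.
have Iff := L2_mul Lf Lf; have Ifg := L2_mul Lf Lg; have Igg := L2_mul Lg Lg.
rewrite RintegralD //; last exact: IntZ.
  rewrite RintegralD //; [|exact: IntZ|exact: IntZ].
  by rewrite !RintegralZl.
by apply: IntD; exact: IntZ.
Qed.

Lemma ipCS f g : L2 f -> L2 g -> ip f g ^+ 2 <= ip f f * ip g g.
Proof.
move=> Lf Lg; apply: quadCS => s t; rewrite -ip_expand //; exact: ip_ge0.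
Qed.

Lemma int0_ae (g : Rd R d -> R) : Int g -> (forall y, 0 <= g y) ->
  \int[u]_y g y = 0 -> u [set y | g y = 0] = 1%E.
Proof.
move=> Ig g0 H.
have mg := Int_meas Ig.
have hfin := integrable_fin_num measurableT Ig.
have H0 : (\int[u]_y (g y)%:E = 0)%E.
  by rewrite -(fineK hfin); move: H; rewrite /Rintegral => ->.
have H1 : (\int[u]_(y in setT) `|(EFin \o g) y| = 0)%E.
  rewrite -H0; apply: eq_integral => y _ /=. by rewrite ger0_norm //; exact: g0.
have := (ae_eq_integral_abs u measurableT (f := EFin \o g)
   (proj2 (measurable_realfun.measurable_EFinP _ g) mg)).1 H1.
case=> N [mN uN sub].
have mS : measurable [set y | g y = 0].
  by have := mg measurableT [set 0] (measurable_set1 _); rewrite setTI.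
have mSC : measurable (~` [set y | g y = 0]) by exact: measurableC.
have le : (u (~` [set y | g y = 0%R]) <= u N)%E.
  apply: (le_measure _ (mem_set mSC) (mem_set mN)) => y /= gy; apply: sub => /= hy.
  by apply: gy; case: (hy I).
have uC : u (~` [set y | g y = 0]) = 0%E.
  by apply/eqP; rewrite eq_le measure_ge0 andbT -uN.
move: uC; rewrite probability_setC //.
move: (u [set y | g y = 0]) => a; case: a => [r| |] //=.
by move=> [] /eqP; rewrite subr_eq0 => /eqP <-.
Qed.

Lemma Int_ipc (c : R) f : Int f -> ip (fun _ => c) f = c * \int[u]_y f y.
Proof. by move=> If; rewrite /ip RintegralZl. Qed.

Lemma int_cst (c : R) : \int[u]_y c = c.
Proof.
rewrite Rintegral_cst // [fine _](_ : _ = 1) ?mulr1 //.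
by apply: (@eq_trans _ _ (fine (1%E : \bar R))) => //; congr fine; exact: probability_setT.
Qed.

Lemma int1 : \int[u]_y (1 : R) = 1.
Proof. exact: int_cst. Qed.

Lemma ip11 : ip (fun _ => 1) (fun _ => 1) = 1.
Proof. by rewrite /ip (RintE _ (fun _ => 1)) ?int1 // => y; rewrite mulr1. Qed.

Hypothesis fsm : finite_second_moment u.

Definition V := mean u.
Definition Y (i : 'I_d) (y : Rd R d) := crd i y - V 0 i.
Definition lin (F : 'I_d -> Rd R d -> R) (v : 'rV[R]_d) (y : Rd R d) := \sum_l v 0 l * F l y.

Lemma L2crd i : L2 (crd i).
Proof.
split; first exact: crd_meas.
apply: (Int_dom _ (fun y => enorm (y : 'rV[R]_d) ^+ 2)) => //.
- apply: measurable_realfun.measurable_funX; exact: crd_meas.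
move=> y; rewrite ger0_norm ?sqr_ge0 // enorm2 (bigD1 i) //= lerDl.
by apply: sumr_ge0 => k _; exact: sqr_ge0.
Qed.

Lemma L2Y i : L2 (Y i).
Proof.
have -> : Y i = crd i \+ (fun _ => - V 0 i) by [].
apply: L2D; [exact: L2crd | exact: L2_cst].
Qed.

Lemma intY i : \int[u]_y Y i y = 0.
Proof.
rewrite /Y RintegralB //; [|exact: L2_Int (L2crd i)|exact: Int_cst].
rewrite int_cst /V /mean mxE.
by apply/eqP; rewrite subr_eq0; apply/eqP.
Qed.

Lemma covE k l : cov u k l = ip (Y k) (Y l).
Proof. by rewrite /cov mxE. Qed.

Lemma L2lin (F : 'I_d -> Rd R d -> R) (v : 'rV[R]_d) : (forall i, L2 (F i)) -> L2 (lin F v).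
Proof. by move=> LF; apply: L2_sum => l; apply: L2Z. Qed.

Lemma gram_mv (F : 'I_d -> Rd R d -> R) k (v : 'rV[R]_d) : (forall i, L2 (F i)) ->
  \sum_l ip (F k) (F l) * v 0 l = ip (F k) (lin F v).
Proof.
move=> LF; rewrite /lin ip_sumr //; last by move=> l; apply: L2Z.
by apply: eq_bigr => l _; rewrite ipZr // mulrC.
Qed.

Lemma gram_q (F : 'I_d -> Rd R d -> R) (v : 'rV[R]_d) : (forall i, L2 (F i)) ->
  \sum_k v 0 k * ip (F k) (lin F v) = ip (lin F v) (lin F v).
Proof.
move=> LF; symmetry; rewrite {2}/lin ip_sumr //; [|exact: L2lin|by move=> l; apply: L2Z].
apply: eq_bigr => k _; rewrite ipZr //; [congr (_ * _); exact: ipC | exact: L2lin].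
Qed.

Definition tr (F : 'I_d -> Rd R d -> R) := \sum_m ip (F m) (F m).

Lemma tr_ge0 F : 0 <= tr F.
Proof. by apply: sumr_ge0 => m _; exact: ip_ge0. Qed.

Lemma gram_upper (F : 'I_d -> Rd R d -> R) (v : 'rV[R]_d) : (forall i, L2 (F i)) ->
  \sum_k v 0 k ^+ 2 = 1 ->
  \sum_k (tr F * v 0 k - ip (F k) (lin F v)) ^+ 2 <= tr F ^+ 2.
Proof.
move=> LF v1.
have t0 := tr_ge0 F.
have q0 : 0 <= ip (lin F v) (lin F v) by exact: ip_ge0.
have ha : \sum_k ip (F k) (lin F v) ^+ 2 <= tr F * ip (lin F v) (lin F v).
  rewrite /tr mulr_suml; apply: ler_sum => k _; apply: ipCS => //; exact: L2lin.
have gq := gram_q F v LF.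
move: (tr F) (ip (lin F v) (lin F v)) t0 q0 ha gq => t q t0 q0 ha gq.
have e : \sum_k (t * v 0 k - ip (F k) (lin F v)) ^+ 2 =
   t ^+ 2 * (\sum_k v 0 k ^+ 2) - 2 * t * (\sum_k v 0 k * ip (F k) (lin F v))
   + \sum_k ip (F k) (lin F v) ^+ 2.
  rewrite !mulr_sumr -sumrB -big_split /=; apply: eq_bigr => k _; ring.
rewrite e v1 gq.
have tq : 0 <= t * q by exact: mulr_ge0.
lra.
Qed.

Lemma gram_lower (F : 'I_d -> Rd R d -> R) (v : 'rV[R]_d) : (forall i, L2 (F i)) ->
  \sum_k v 0 k ^+ 2 = 1 ->
  tr F - ip (lin F v) (lin F v) <= Num.sqrt (\sum_k (tr F * v 0 k - ip (F k) (lin F v)) ^+ 2).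
Proof.
move=> LF v1.
have -> : tr F - ip (lin F v) (lin F v) = \sum_k v 0 k * (tr F * v 0 k - ip (F k) (lin F v)).
  have -> : \sum_k v 0 k * (tr F * v 0 k - ip (F k) (lin F v)) =
     tr F * (\sum_k v 0 k ^+ 2) - \sum_k v 0 k * ip (F k) (lin F v).
    by rewrite mulr_sumr -sumrB; apply: eq_bigr => k _; ring.
  by rewrite v1 mulr1 gram_q.
exact: (dot_le _ _ (fun k => v 0 k) (fun k => tr F * v 0 k - ip (F k) (lin F v)) v1).
Qed.

Definition Z (x : 'rV[R]_d) (i : 'I_d) (y : Rd R d) := x 0 i - crd i y.

Lemma L2Zx (x : 'rV[R]_d) i : L2 (Z x i).
Proof.
have -> : Z x i = (fun _ => x 0 i) \+ (fun y => -1 * crd i y).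
  by apply/funext => y; rewrite /Z /= mulN1r.
apply: L2D; [exact: L2_cst | apply: L2Z; exact: L2crd].
Qed.

Lemma sum_delta (k : 'I_d) (c : 'I_d -> R) : \sum_l (k == l)%:R * c l = c k.
Proof.
rewrite (bigD1 k) //= eqxx mul1r big1 ?addr0 // => l lk.
by rewrite eq_sym (negbTE lk) mul0r.
Qed.

Lemma mconvE (x : 'rV[R]_d) k l : mconv (@Amat R d) u x k l =
  (k == l)%:R * tr (Z x) - ip (Z x k) (Z x l).
Proof.
rewrite /mconv mxE.
rewrite (RintE _ (fun y => (k == l)%:R * (\sum_m Z x m y * Z x m y) - Z x k y * Z x l y)).
  rewrite RintegralB //; last exact: L2_mul (L2Zx _ _) (L2Zx _ _).
    rewrite RintegralZl //; last by have [] := Int_sum _ (index_enum _) (fun m y => Z x m y * Z x m y) (fun m => L2_mul (L2Zx x m) (L2Zx x m)).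
    by have [_ ->] := Int_sum _ (index_enum _) (fun m y => Z x m y * Z x m y) (fun m => L2_mul (L2Zx x m) (L2Zx x m)).
  apply: IntZ.
  by have [] := Int_sum _ (index_enum _) (fun m y => Z x m y * Z x m y) (fun m => L2_mul (L2Zx x m) (L2Zx x m)).
move=> y; rewrite /Amat !mxE enorm2 big_ord1 !mxE /Z /crd mulrC.
congr (_ * _ - _); apply: eq_bigr => m _; rewrite !mxE expr2 //.
Qed.

Lemma mvvN (x v : 'rV[R]_d) k : mvv (mconv (@Amat R d) u x) v k = tr (Z x) * v 0 k - ip (Z x k) (lin (Z x) v).
Proof.
rewrite /mvv (eq_bigr (fun l => (k == l)%:R * (tr (Z x) * v 0 l) - ip (Z x k) (Z x l) * v 0 l)); last first.
  by move=> l _; rewrite mconvE; ring.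
rewrite sumrB sum_delta gram_mv //; exact: L2Zx.
Qed.

Lemma mvvC (v : 'rV[R]_d) k : mvv (cov u) v k = ip (Y k) (lin Y v).
Proof.
rewrite /mvv (eq_bigr (fun l => ip (Y k) (Y l) * v 0 l)); last by move=> l _; rewrite covE.
rewrite gram_mv //; exact: L2Y.
Qed.

Lemma ip1Y i : ip (fun _ => 1) (Y i) = 0.
Proof. by rewrite Int_ipc ?intY ?mulr0 //; exact: L2_Int (L2Y i). Qed.

Lemma ipZZ (x : 'rV[R]_d) m : ip (Z x m) (Z x m) = (x 0 m - V 0 m) ^+ 2 + cov u m m.
Proof.
have -> : Z x m = (fun y => (x 0 m - V 0 m) * 1 + (-1) * Y m y).
  by apply/funext => y; rewrite /Z /Y; ring.
rewrite ip_expand; [|exact: L2_cst|exact: L2Y].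
by rewrite ip11 ip1Y covE; ring.
Qed.

Lemma trZ (x : 'rV[R]_d) : tr (Z x) = enorm (x - V) ^+ 2 + \tr (cov u).
Proof.
rewrite /tr enorm2 /mxtrace -big_split /=; apply: eq_bigr => m _.
by rewrite ipZZ !mxE.
Qed.

Lemma twoE_E : \int[u]_y (enorm (y : 'rV[R]_d) ^+ 2) = \tr (cov u) + \sum_m V 0 m ^+ 2.
Proof.
rewrite (RintE _ (fun y => \sum_m crd m y * crd m y)); last first.
  by move=> y; rewrite enorm2; apply: eq_bigr => m _; rewrite expr2.
have [_ ->] := Int_sum _ (index_enum _) (fun m y => crd m y * crd m y) (fun m => L2_mul (L2crd m) (L2crd m)).
rewrite /mxtrace -big_split /=; apply: eq_bigr => m _.
have -> : crd m = (fun y => V 0 m * 1 + 1 * Y m y) by apply/funext => y; rewrite /Y; ring.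
rewrite -/(ip _ _) ip_expand; [|exact: L2_cst|exact: L2Y].
by rewrite ip11 ip1Y covE; ring.
Qed.

Lemma lin_perp (x : 'rV[R]_d) (v : 'rV[R]_d) : \sum_l v 0 l * (x 0 l - V 0 l) = 0 ->
  ip (lin (Z x) v) (lin (Z x) v) = ip (lin Y v) (lin Y v).
Proof.
move=> h.
have -> : lin (Z x) v = (fun y => -1 * lin Y v y).
  apply/funext => y; rewrite /lin.
  have -> : \sum_l v 0 l * Z x l y = \sum_l v 0 l * (x 0 l - V 0 l) - \sum_l v 0 l * Y l y.
    by rewrite -sumrB; apply: eq_bigr => l _; rewrite /Z /Y; ring.
  by rewrite h; ring.
by rewrite /ip; apply: RintE => y; ring.
Qed.

Definition fl (i j : 'I_d) (b : 'rV[R]_d) (y : Rd R d) := Y j y - b 0 j * Y i y.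

Lemma L2fl i j b : L2 (fl i j b).
Proof.
have -> : fl i j b = Y j \+ (fun y => (- b 0 j) * Y i y) by apply/funext => y; rewrite /fl /=; ring.
apply: L2D; first exact: L2Y.
apply: L2Z; exact: L2Y.
Qed.

Lemma not_line (i : 'I_d) (b : 'rV[R]_d) : b 0 i = 1 -> ~ concentrated_on_line u ->
  exists j, 0 < ip (fl i j b) (fl i j b).
Proof.
move=> bi nc.
case: (pselect (exists j, 0 < ip (fl i j b) (fl i j b))) => // hn; exfalso; apply: nc.
have h0 : forall j, ip (fl i j b) (fl i j b) = 0.
  move=> j; apply/eqP; rewrite eq_le ip_ge0 andbT leNgt; apply/negP => h; apply: hn; by exists j.
pose g := fun y => \sum_j fl i j b y ^+ 2.
have [Ig intg] := Int_sum _ (index_enum 'I_d) (fun j y => fl i j b y ^+ 2) (fun j => (L2fl i j b).2).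
have g0 : forall y, 0 <= g y by move=> y; apply: sumr_ge0 => j _; exact: sqr_ge0.
have ig : \int[u]_y g y = 0.
  rewrite /g intg big1 // => j _; rewrite -(h0 j) /ip; apply: RintE => y; exact: expr2.
have ug := int0_ae g Ig g0 ig.
exists V, b; split.
  by apply/eqP => b0; move: bi; rewrite b0 mxE => /eqP; rewrite eq_sym oner_eq0.
rewrite -ug; congr (u _); apply/seteqP; split.
  move=> _ [t _ <-]; rewrite /= /g; apply: big1 => j _.
  by rewrite /fl /Y /crd !mxE bi [X in X ^+ 2](_ : _ = 0) ?expr0n //; ring.
move=> y /= gy; exists (Y i y) => //.
apply/rowP => j; rewrite !mxE.
have hj : fl i j b y ^+ 2 <= g y.
  rewrite /g (bigD1 j) //= lerDl; apply: sumr_ge0 => k _; exact: sqr_ge0.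
rewrite gy in hj.
have : fl i j b y ^+ 2 = 0 by apply/eqP; rewrite eq_le hj sqr_ge0.
move/eqP; rewrite sqrf_eq0 /fl /Y /crd => /eqP e.
move: e; rewrite /V /mean mxE => e.
by apply/eqP; rewrite -subr_eq0 -oppr_eq0; apply/eqP; rewrite -e; ring.
Qed.

Lemma ipfl i j b : ip (fl i j b) (fl i j b) =
  cov u j j - 2 * b 0 j * cov u i j + b 0 j ^+ 2 * cov u i i.
Proof.
have -> : fl i j b = (fun y => 1 * Y j y + (- b 0 j) * Y i y) by apply/funext => y; rewrite /fl; ring.
rewrite ip_expand; [|exact: L2Y|exact: L2Y].
by rewrite !covE (ipC (Y j)); ring.
Qed.

Lemma Cdiag_ge0 k : 0 <= cov u k k.
Proof. rewrite covE; exact: ip_ge0. Qed.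

Lemma C_CS k l : cov u k l ^+ 2 <= cov u k k * cov u l l.
Proof. by rewrite !covE; apply: ipCS; exact: L2Y. Qed.

Lemma eps_pos : (0 < d)%N -> ~ concentrated_on_line u -> spec_norm (cov u) < \tr (cov u).
Proof.
move=> d0 nc.
have [i Cii] : exists i, 0 < cov u i i.
  pose i0 := Ordinal d0.
  have bi : (\row_k (k == i0)%:R : 'rV[R]_d) 0 i0 = 1 by rewrite mxE eqxx.
  have bk : forall k, (\row_k (k == i0)%:R : 'rV[R]_d) 0 k = (k == i0)%:R by move=> k; rewrite mxE.
  have [j] := not_line _ _ bi nc; rewrite ipfl !bk.
  case: (eqVneq j i0) => [->|/negbTE ne]; rewrite ?eqxx ?ne /= ?mulr1n ?mulr0n.
    by rewrite (_ : _ + _ = 0) ?ltxx //; ring.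
  by move=> h; exists j; move: h; rewrite (_ : _ + _ = cov u j j) //; ring.
have Cii0 : cov u i i != 0 by rewrite gt_eqF.
have [j hj] : exists j, 0 < cov u i i * cov u j j - cov u i j ^+ 2.
  have bi : (\row_k (cov u i k / cov u i i) : 'rV[R]_d) 0 i = 1 by rewrite mxE divff.
  have bk : forall k, (\row_k (cov u i k / cov u i i) : 'rV[R]_d) 0 k = cov u i k / cov u i i.
    by move=> k; rewrite mxE.
  have [j] := not_line _ _ bi nc; rewrite ipfl !bk => h; exists j.
  have e : cov u i i * (cov u j j - 2 * (cov u i j / cov u i i) * cov u i j +
      (cov u i j / cov u i i) ^+ 2 * cov u i i) = cov u i i * cov u j j - cov u i j ^+ 2.
    by field.
  by rewrite -e; apply: mulr_gt0.
set F2 := \sum_k \sum_l cov u k l ^+ 2.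
have trpos : 0 < \tr (cov u).
  by rewrite /mxtrace; apply: (sum_pos _ i) => // k; exact: Cdiag_ge0.
have F2lt : F2 < \tr (cov u) ^+ 2.
  have -> : \tr (cov u) ^+ 2 = \sum_k \sum_l cov u k k * cov u l l.
    by rewrite expr2 /mxtrace mulr_suml; apply: eq_bigr => k _; rewrite mulr_sumr.
  apply: (sum2_lt _ _ _ _ i j); first by move=> k l; exact: C_CS.
  by rewrite ltNge; apply/negP => h; move: hj; rewrite subr_gt0 ltNge h.
have F20 : 0 <= F2 by apply: sumr_ge0 => k _; apply: sumr_ge0 => l _; exact: sqr_ge0.
have H : forall v : 'rV[R]_d, \sum_k v 0 k ^+ 2 = 1 ->
    \sum_k mvv (cov u) v k ^+ 2 <= Num.sqrt F2 ^+ 2.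
  move=> v v1; rewrite sqr_sqrtr // /F2; apply: ler_sum => k _.
  by have := finCS _ _ (fun l => cov u k l) (fun l => v 0 l); rewrite v1 mulr1.
have [sp _] := specP _ _ (cov u) (Num.sqrt F2) d0 (sqrtr_ge0 F2) H.
apply: le_lt_trans sp _.
have : Num.sqrt F2 < Num.sqrt (\tr (cov u) ^+ 2) by rewrite ltr_sqrt // exprn_gt0.
by rewrite sqrtr_sqr gtr0_norm.
Qed.

Lemma C_spec : (0 < d)%N -> forall v : 'rV[R]_d, \sum_k v 0 k ^+ 2 = 1 ->
  Num.sqrt (\sum_k mvv (cov u) v k ^+ 2) <= spec_norm (cov u).
Proof.
move=> d0.
set F2 := \sum_k \sum_l cov u k l ^+ 2.
have F20 : 0 <= F2 by apply: sumr_ge0 => k _; apply: sumr_ge0 => l _; exact: sqr_ge0.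
have H : forall v : 'rV[R]_d, \sum_k v 0 k ^+ 2 = 1 ->
    \sum_k mvv (cov u) v k ^+ 2 <= Num.sqrt F2 ^+ 2.
  move=> v v1; rewrite sqr_sqrtr // /F2; apply: ler_sum => k _.
  by have := finCS _ _ (fun l => cov u k l) (fun l => v 0 l); rewrite v1 mulr1.
by have [_ sp] := specP _ _ (cov u) (Num.sqrt F2) d0 (sqrtr_ge0 F2) H.
Qed.

Lemma main_bounds : (1 < d)%N -> forall x : 'rV[R]_d,
  \tr (cov u) - spec_norm (cov u) <= spec_norm (mconv (@Amat R d) u x) <=
  \int[u]_y (enorm (y : 'rV[R]_d) ^+ 2) + enorm (x - mean u) ^+ 2.
Proof.
move=> d1 x; have d0 : (0 < d)%N by apply: ltn_trans d1.
have LZ := L2Zx x.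
have Hup : forall v : 'rV[R]_d, \sum_k v 0 k ^+ 2 = 1 ->
    \sum_k mvv (mconv (@Amat R d) u x) v k ^+ 2 <= tr (Z x) ^+ 2.
  move=> v v1; rewrite (eq_bigr (fun k => (tr (Z x) * v 0 k - ip (Z x k) (lin (Z x) v)) ^+ 2)).
    exact: gram_upper.
  by move=> k _; rewrite mvvN.
have [sp1 sp2] := specP _ _ (mconv (@Amat R d) u x) (tr (Z x)) d0 (tr_ge0 _) Hup.
have trZ' := trZ x.
have tw := twoE_E.
have V2 : 0 <= \sum_m V 0 m ^+ 2 by apply: sumr_ge0 => m _; exact: sqr_ge0.
have en0 : 0 <= enorm (x - V) ^+ 2 by exact: sqr_ge0.
apply/andP; split; last first.
  apply: (le_trans sp1); rewrite trZ' tw -/V; lra.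
have [v [v1 vp]] := perp_unit (x - V) d1.
have vp' : \sum_l v 0 l * (x 0 l - V 0 l) = 0.
  by rewrite -[RHS]vp; apply: eq_bigr => l _; rewrite !mxE.
have s2 := sp2 v v1.
have gl := gram_lower (Z x) v LZ v1.
rewrite (eq_bigr (fun k => (tr (Z x) * v 0 k - ip (Z x k) (lin (Z x) v)) ^+ 2)) in s2; last first.
  by move=> k _; rewrite mvvN.
rewrite lin_perp // in gl.
have qY : ip (lin Y v) (lin Y v) <= spec_norm (cov u).
  rewrite -(gram_q Y v L2Y).
  apply: (le_trans (dot_le _ _ (fun k => v 0 k) (fun k => ip (Y k) (lin Y v)) v1)).
  rewrite (eq_bigr (fun k => mvv (cov u) v k ^+ 2)); last by move=> k _; rewrite mvvC.
  exact: C_spec.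

have key : \tr (cov u) - spec_norm (cov u) <= tr (Z x) - ip (lin Y v) (lin Y v).
  rewrite trZ'; apply: lerB => //; exact: ler_wpDl.
exact: le_trans key (le_trans gl s2).
Qed.

End S.

Lemma line1 (R : realType) (u : probability (Rd R 1) R) : concentrated_on_line u.
Proof.
exists 0, (\row_ _ 1); split.
  apply/eqP => /rowP /(_ ord0); rewrite !mxE => /eqP; by rewrite oner_eq0.
have -> : [set (0 + t *: (\row_ _ 1) : Rd R 1) | t in [set: R]] = setT.
  apply/seteqP; split => // y _; exists ((y : 'rV[R]_1) 0 0) => //.
  by apply/rowP => j; rewrite !mxE (ord1 j) mulr1 add0r.
exact: probability_setT.
Qed.

Theorem lemma2p3 (R : realType) (d : nat) (u : probability (Rd R d) R) :
  (0 < d)%N ->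
  finite_second_moment u ->
  ~ concentrated_on_line u ->
  let twoE := \int[u]_x (enorm (x : 'rV[R]_d) ^+ 2) in
  let V := mean u in
  let eps := \tr (cov u) - spec_norm (cov u) in
  0 < eps /\
  forall x : 'rV[R]_d,
    eps <= spec_norm (mconv (@Amat R d) u x) <= twoE + enorm (x - V) ^+ 2.
Proof.
move=> d0 fsm nc twoE V eps.
have d1 : (1 < d)%N.
  rewrite ltn_neqAle d0 andbT; apply/eqP => e; subst d.
  by apply: nc; exact: line1.
split; first by rewrite /eps subr_gt0; exact: eps_pos.
by move=> x; exact: main_bounds.
Qed.
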